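(* Let $\hat V$ be an $\omega$-nonstandard model of $ZFC^-$ and suppose $\mathfrak{p}_{\hat V}<\mathfrak{t}_{\hat V}$. Writing $\kappa=\mathfrak{p}_{\hat V}$, we have $(\kappa,\kappa)\notin\mathcal{C}_{\hat V}$.
   Context: $ZFC^-$ denotes $ZFC$ without the powerset axiom, with replacement strengthened to collection and choice strengthened to the well-ordering principle. For a model $\hat V \models ZFC^-$, write $\hat\omega$ for $\omega^{\hat V}$ and $\hat<$ for its order. $\hat V$ is $\omega$-nonstandard if $\hat\omega \neq \omega$. For infinite regular cardinals $\kappa,\theta$, a $(\kappa,\theta)$-cut in a linear order $(L,<)$ is a pair of sequences $(a_\alpha:\alpha<\kappa)$ strictly increasing and $(b_\beta:\beta<\theta)$ strictly decreasing with $a_\alpha<b_\beta$ for all $\alpha,\beta$, such that no $c\in L$ satisfies $a_\alpha<c<b_\beta$ for all $\alpha,\beta$. $\mathcal{C}_{\hat V}$ is the set of pairs $(\kappa,\theta)$ of infinite regular cardinals such that $(\hat\omega,\hat<)$ admits a $(\kappa,\theta)$-cut, and $\mathfrak{p}_{\hat V}=\min\{\kappa+\theta:(\kappa,\theta)\in\mathcal{C}_{\hat V}\}$. A tree is a partial order with meets and a minimum element in which the predecessors of each element are linearly ordered; $\mathrm{tree\text{-}tops}(T)$ is the least cardinal $\kappa$ such that there is a strictly increasing sequence $(s_\alpha:\alpha<\kappa)$ in $T$ with no upper bound in $T$. $\mathfrak{t}_{\hat V}$ is the minimum over all $\hat n\in\hat\omega$ of $\mathrm{tree\text{-}tops}$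 of the (external) tree $(\hat n^{<\hat n},\subsetneq)$ of sequences (in $\hat V$) from $\hat n$ of $\hat V$-length less than $\hat n$, ordered by proper initial segment. *)

(* Defs.v *)
From Stdlib Require Import Arith.

(* de Bruijn variables, and satisfaction in a structure (M, E).       *)
Inductive form : Type :=
| fIn  : nat -> nat -> form
| fEq  : nat -> nat -> form
| fNeg : form -> form
| fAnd : form -> form -> form
| fOr  : form -> form -> form
| fImp : form -> form -> form
| fAll : form -> form
| fEx  : form -> form.

Definition scons {M : Type} (x : M) (e : nat -> M) : nat -> M :=
  fun n => match n with 0 => x | S k => e k end.

Fixpoint sat {M : Type} (E : M -> M -> Prop) (e : nat -> M) (p : form) : Prop :=
  match p with
  | fIn i j => E (e i) (e j)
  | fEq i j => e i = e j
  | fNeg q => ~ sat E e q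
  | fAnd q r => sat E e q /\ sat E e r
  | fOr q r => sat E e q \/ sat E e r
  | fImp q r => sat E e q -> sat E e r
  | fAll q => forall x, sat E (scons x e) q
  | fEx q => exists x, sat E (scons x e) q
  end.

Section ModelDefs.
Variables (M : Type) (E : M -> M -> Prop).

Definition is_empty (x : M) : Prop := forall z, ~ E z x.

(* p is the Kuratowski ordered pair {{a},{a,b}} *)
Definition is_opair (p a b : M) : Prop :=
  forall z, E z p <->
    ((forall u, E u z <-> u = a) \/ (forall u, E u z <-> (u = a \/ u = b))).

Definition rel_in (r a b : M) : Prop := exists p, E p r /\ is_opair p a b.

Definition is_succ (s y : M) : Prop := forall z, E z s <-> (E z y \/ z = y).

Definition inductive (I : M) : Prop :=
  (exists e, E e I /\ is_empty e) /\
  (forall y, E y I -> exists s, E s I /\ is_succ s y).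

Definition Ax_ext : Prop := forall x y, (forall z, E z x <-> E z y) -> x = y.
Definition Ax_found : Prop :=
  forall x, (exists y, E y x) -> exists y, E y x /\ ~ exists z, E z y /\ E z x.
Definition Ax_pair : Prop := forall a b, exists c, E a c /\ E b c.
Definition Ax_union : Prop :=
  forall a, exists u, forall y z, E y a -> E z y -> E z u.
Definition Ax_inf : Prop := exists I, inductive I.
(* Separation schema (with parameters e; variable 0 is x). *)
Definition Ax_sep : Prop :=
  forall (phi : form) (e : nat -> M) (a : M),
    exists b, forall x, E x b <-> (E x a /\ sat E (scons x e) phi).
(* Collection schema (variable 0 is y, variable 1 is x, parameters e). *)
Definition Ax_coll : Prop :=
  forall (phi : form) (e : nat -> M) (a : M),
    (forall x, E x a -> exists y, sat E (scons y (scons x e)) phi) ->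
    exists b, forall x, E x a -> exists y, E y b /\ sat E (scons y (scons x e)) phi.
Definition Ax_wo : Prop :=
  forall x, exists r,
    (forall a, E a x -> ~ rel_in r a a) /\
    (forall a b c, E a x -> E b x -> E c x -> rel_in r a b -> rel_in r b c -> rel_in r a c) /\
    (forall a b, E a x -> E b x -> rel_in r a b \/ a = b \/ rel_in r b a) /\
    (forall y, (forall z, E z y -> E z x) -> (exists z, E z y) ->
       exists m, E m y /\ forall z, E z y -> ~ rel_in r z m).

Definition ZFCminus : Prop :=
  Ax_ext /\ Ax_found /\ Ax_pair /\ Ax_union /\ Ax_inf /\ Ax_sep /\ Ax_coll /\ Ax_wo.

Definition is_omega (w : M) : Prop :=
  inductive w /\ forall I, inductive I -> forall x, E x w -> E x I.

Definition omega_nonstandard (w : M) : Prop :=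
  ~ exists f : nat -> M,
      (forall n, E (f n) w) /\ (forall x, E x w -> exists n, f n = x) /\
      (forall n m, n < m <-> E (f n) (f m)).

Definition is_seq (nh s : M) : Prop :=
  exists m, E m nh /\
    (forall p, E p s -> exists a b, is_opair p a b /\ E a m /\ E b nh) /\
    (forall a, E a m -> exists b, rel_in s a b /\ forall b', rel_in s a b' -> b' = b).

(* initial segment of sequences (= inclusion of graphs) *)
Definition seq_le (s t : M) : Prop := forall z, E z s -> E z t.
Definition seq_lt (s t : M) : Prop := seq_le s t /\ s <> t.

End ModelDefs.

(* External cardinals, represented by well-ordered types.             *)
Definition le_card (A B : Type) : Prop :=
  exists f : A -> B, forall x y, f x = f y -> x = y.
Definition eq_card (A B : Type) : Prop :=
  exists f : A -> B, (forall x y, f x = f y -> x = y) /\ (forall y, exists x, f x = y).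

Definition is_wellorder (I : Type) (lt : I -> I -> Prop) : Prop :=
  (forall i, ~ lt i i) /\
  (forall i j k, lt i j -> lt j k -> lt i k) /\
  (forall i j, lt i j \/ i = j \/ lt j i) /\
  well_founded lt.

Definition is_cardinal (I : Type) (lt : I -> I -> Prop) : Prop :=
  is_wellorder I lt /\ forall i, ~ le_card I {j : I | lt j i}.

Definition is_inf_regular (I : Type) (lt : I -> I -> Prop) : Prop :=
  is_cardinal I lt /\ le_card nat I /\
  forall S : I -> Prop, (forall i, exists j, S j /\ ~ lt j i) -> le_card I {j : I | S j}.

Definition has_cut (M : Type) (E : M -> M -> Prop) (w : M)
    (A : Type) (ltA : A -> A -> Prop) (B : Type) (ltB : B -> B -> Prop) : Prop :=
  exists (a : A -> M) (b : B -> M),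
    (forall x, E (a x) w) /\ (forall y, E (b y) w) /\
    (forall x x', ltA x x' -> E (a x) (a x')) /\
    (forall y y', ltB y y' -> E (b y') (b y)) /\
    (forall x y, E (a x) (b y)) /\
    ~ exists c, E c w /\ forall x y, E (a x) c /\ E c (b y).

Definition in_C (M : Type) (E : M -> M -> Prop) (w : M)
    (A : Type) (ltA : A -> A -> Prop) (B : Type) (ltB : B -> B -> Prop) : Prop :=
  is_inf_regular A ltA /\ is_inf_regular B ltB /\ has_cut M E w A ltA B ltB.

Definition is_p (M : Type) (E : M -> M -> Prop) (w : M) (K : Type) : Prop :=
  (exists (A : Type) (ltA : A -> A -> Prop) (B : Type) (ltB : B -> B -> Prop),
      in_C M E w A ltA B ltB /\ eq_card (A + B)%type K) /\
  (forall (A : Type) (ltA : A -> A -> Prop) (B : Type) (ltB : B -> B -> Prop),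
      in_C M E w A ltA B ltB -> le_card K (A + B)%type).

(* |K| < t_V : for every n̂ ∈ ω̂ (n̂ ≠ 0), tree-tops(n̂^{<n̂}) > |K|, i.e. every
   strictly increasing sequence indexed by a cardinal of size ≤ |K| is bounded *)
Definition lt_t (M : Type) (E : M -> M -> Prop) (w : M) (K : Type) : Prop :=
  forall nh, E nh w -> (exists z, E z nh) ->
  forall (J : Type) (ltJ : J -> J -> Prop), is_cardinal J ltJ -> le_card J K ->
  forall f : J -> M,
    (forall j, is_seq M E nh (f j)) ->
    (forall i j, ltJ i j -> seq_lt M E (f i) (f j)) ->
    exists t, is_seq M E nh t /\ forall j, seq_le M E (f j) t.

(* Main.v *)
Require Import Defs.
From Stdlib Require Import Classical ClassicalEpsilon FunctionalExtensionality ProofIrrelevance Wellfounded.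

Definition f_iff (A B : form) := fAnd (fImp A B) (fImp B A).
Definition f_opair (p a b : nat) : form :=
  fAll (f_iff (fIn 0 (S p))
     (fOr (fAll (f_iff (fIn 0 1) (fEq 0 (S (S a)))))
          (fAll (f_iff (fIn 0 1) (fOr (fEq 0 (S (S a))) (fEq 0 (S (S b)))))))).
Definition f_rel (r a b : nat) : form :=
  fEx (fAnd (fIn 0 (S r)) (f_opair 0 (S a) (S b))).

Section Model.
Variables (M : Type) (E : M -> M -> Prop) (w : M).
Hypothesis hZ : ZFCminus M E.
Hypothesis hw : is_omega M E w.

Lemma sat_opair e p a b : sat E e (f_opair p a b) <-> is_opair M E (e p) (e a) (e b).
Proof. unfold is_opair; cbn; split; intros H z; specialize (H z); firstorder. Qed.

Lemma sat_rel e r a b : sat E e (f_rel r a b) <-> rel_in M E (e r) (e a) (e b).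
Proof. unfold rel_in, f_rel. change (sat E e (fEx (fAnd (fIn 0 (S r)) (f_opair 0 (S a) (S b)))))
  with (exists x, E x (e r) /\ sat E (scons x e) (f_opair 0 (S a) (S b))).
  split; intros [p [H1 H2]]; exists p; split; auto;
  apply (sat_opair (scons p e) 0 (S a) (S b)); auto. Qed.

Lemma ext : Ax_ext M E. Proof. apply hZ. Qed.
Lemma sep : Ax_sep M E. Proof. apply hZ. Qed.

Lemma sep' (P : M -> Prop) phi e (HP : forall x, sat E (scons x e) phi <-> P x) a :
  exists b, forall x, E x b <-> (E x a /\ P x).
Proof. destruct (sep phi e a) as [b Hb]. exists b. intro x. rewrite Hb, HP. tauto. Qed.

Lemma pair_set a b : exists c, forall x, E x c <-> (x = a \/ x = b).
Proof.
  destruct (proj1 (proj2 (proj2 hZ)) a b) as [c [Ha Hb]].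
  destruct (sep' (fun x => x = a \/ x = b) (fOr (fEq 0 1) (fEq 0 2)) (scons a (scons b (fun _ => a)))) with (a := c) as [d Hd].
  { intros; cbn; tauto. }
  exists d. intro x. rewrite Hd. split; [tauto|]. intros [->| ->]; auto.
Qed.

Lemma sing_set a : exists c, forall x, E x c <-> x = a.
Proof. destruct (pair_set a a) as [c Hc]. exists c. intro x; rewrite Hc; tauto. Qed.

Lemma opair_exists a b : exists p, is_opair M E p a b.
Proof.
  destruct (sing_set a) as [s1 H1]. destruct (pair_set a b) as [s2 H2].
  destruct (pair_set s1 s2) as [p Hp]. exists p. intro z. rewrite Hp. split.
  - intros [->| ->]; [left|right]; auto.
  - intros [H|H]; [left|right]; apply ext; intro u; rewrite H; [rewrite H1|rewrite H2]; tauto.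
Qed.

Lemma opair_inj p a b a' b' : is_opair M E p a b -> is_opair M E p a' b' -> a = a' /\ b = b'.
Proof.
  intros H H'.
  destruct (sing_set a') as [s1 H1]. destruct (pair_set a' b') as [s2 H2].
  destruct (sing_set a) as [t1 T1]. destruct (pair_set a b) as [t2 T2].
  assert (Hs1 : E s1 p) by (apply H'; left; auto).
  assert (Hs2 : E s2 p) by (apply H'; right; auto).
  assert (Ht2 : E t2 p) by (apply H; right; auto).
  assert (aa : a = a').
  { apply H in Hs1. destruct Hs1 as [K|K].
    - symmetry. apply K, H1; auto.
    - assert (E a s1) by (apply K; auto). apply H1; auto. }
  subst a'. split; auto.
  apply H in Hs2. destruct Hs2 as [K|K].
  - assert (b' = a) by (apply K, H2; auto). subst b'.
    apply H' in Ht2. destruct Ht2 as [K2|K2].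
    + apply K2, T2; auto.
    + assert (Hb : E b t2) by (apply T2; auto). apply K2 in Hb. tauto.
  - assert (Hb' : E b' s2) by (apply H2; auto). apply K in Hb'.
    destruct Hb' as [->|]; auto.
    assert (Hb : E b s2) by (apply K; auto). apply H2 in Hb. destruct Hb; congruence.
Qed.


Lemma no_self x : ~ E x x.
Proof.
  intro Hx. destruct (sing_set x) as [c Hc].
  destruct (proj1 (proj2 hZ) c) as [y [Hy Hn]]. exists x; apply Hc; auto.
  apply Hc in Hy; subst y. apply Hn. exists x; split; auto. apply Hc; auto.
Qed.

Lemma union2 a b : exists u, forall x, (E x a \/ E x b) -> E x u.
Proof.
  destruct (pair_set a b) as [c Hc].
  destruct (proj1 (proj2 (proj2 (proj2 hZ))) c) as [u Hu].
  exists u. intros x [H|H]; [apply (Hu a)|apply (Hu b)]; auto; apply Hc; auto.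
Qed.

Lemma w_ind (P : M -> Prop) phi e (HP : forall x, sat E (scons x e) phi <-> P x)
  (H0 : forall x, is_empty M E x -> E x w -> P x)
  (HS : forall y s, E y w -> P y -> is_succ M E s y -> P s) : forall n, E n w -> P n.
Proof.
  destruct (sep' P phi e HP w) as [b Hb].
  assert (Ib : inductive M E b).
  { destruct (proj1 hw) as [[z [Hz Hz']] Hs]. split.
    - exists z; split; auto. apply Hb; split; auto.
    - intros y Hy. apply Hb in Hy. destruct Hy as [Hy Py].
      destruct (Hs y Hy) as [s [Hs1 Hs2]]. exists s; split; auto. apply Hb; split; eauto. }
  intros n Hn. apply (proj2 hw b Ib) in Hn. apply Hb in Hn. tauto.
Qed.

Lemma nat_trans n : E n w -> forall a b, E a b -> E b n -> E a n.
Proof.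
  revert n. apply (w_ind (fun n => forall a b, E a b -> E b n -> E a n)
    (fAll (fAll (fImp (fIn 1 0) (fImp (fIn 0 2) (fIn 1 2))))) (fun _ => w)).
  - intros; cbn; tauto.
  - intros x Hx _ a b _ Hb. exfalso; eapply Hx; eauto.
  - intros y s _ IH Hs a b Hab Hb. apply Hs in Hb. apply Hs. left.
    destruct Hb as [Hb| ->]; eauto.
Qed.

Lemma w_trans n : E n w -> forall m, E m n -> E m w.
Proof.
  revert n. apply (w_ind (fun n => forall m, E m n -> E m w)
    (fAll (fImp (fIn 0 1) (fIn 0 2))) (fun _ => w)).
  - intros; cbn; tauto.
  - intros x Hx _ m Hm. exfalso; eapply Hx; eauto.
  - intros y s Hy IH Hs m Hm. apply Hs in Hm. destruct Hm as [Hm| ->]; eauto.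
Qed.

Lemma succ_unique s s' y : is_succ M E s y -> is_succ M E s' y -> s = s'.
Proof. intros H H'. apply ext. intro z. rewrite (H z), (H' z). tauto. Qed.

Lemma empty_unique x y : is_empty M E x -> is_empty M E y -> x = y.
Proof. intros H H'. apply ext. intro z. split; intro Hz; exfalso; [eapply H|eapply H']; eauto. Qed.

Definition f_empty (i : nat) := fAll (fNeg (fIn 0 (S i))).
Lemma sat_empty e i : sat E e (f_empty i) <-> is_empty M E (e i).
Proof. unfold is_empty; cbn; tauto. Qed.

Lemma L0 m : E m w -> is_empty M E m \/ forall z, is_empty M E z -> E z m.
Proof.
  revert m. apply (w_ind _ (fOr (f_empty 0) (fAll (fImp (f_empty 0) (fIn 0 1)))) (fun _ => w)).
  - intros; cbn; unfold is_empty; tauto.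
  - auto.
  - intros y s _ IH Hs. right. intros z Hz. apply Hs. destruct IH as [IH|IH].
    + right; apply empty_unique; auto.
    + left; auto.
Qed.

Definition f_succ (s y : nat) := fAll (f_iff (fIn 0 (S s)) (fOr (fIn 0 (S y)) (fEq 0 (S y)))).
Lemma sat_succ e s y : sat E e (f_succ s y) <-> is_succ M E (e s) (e y).
Proof. unfold is_succ; cbn; split; intros H z; specialize (H z); tauto. Qed.

Lemma L1 m : E m w -> forall y s, E y m -> is_succ M E s y -> E s m \/ s = m.
Proof.
  revert m. apply (w_ind (fun m => forall y s, E y m -> is_succ M E s y -> E s m \/ s = m)
    (fAll (fAll (fImp (fIn 1 2) (fImp (f_succ 0 1) (fOr (fIn 0 2) (fEq 0 2)))))) (fun _ => w)).
  - intro x. cbn [sat]. split; intros H y s; specialize (H y s);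
      rewrite (sat_succ (scons s (scons y (scons x (fun _ => w)))) 0 1) in *; cbn in *; tauto.
  - intros x Hx _ y s Hy. exfalso; eapply Hx; eauto.
  - intros m m' Hm IH Hs y s Hy Hsy. apply Hs in Hy. destruct Hy as [Hy| ->].
    + left. apply Hs. destruct (IH y s Hy Hsy) as [H| ->]; auto.
    + right. eapply succ_unique; eauto.
Qed.

Lemma tri n : E n w -> forall m, E m w -> E m n \/ m = n \/ E n m.
Proof.
  revert n. apply (w_ind (fun n => forall m, E m w -> E m n \/ m = n \/ E n m)
    (fAll (fImp (fIn 0 2) (fOr (fIn 0 1) (fOr (fEq 0 1) (fIn 1 0))))) (fun _ => w)).
  - intros; cbn; tauto.
  - intros x Hx _ m Hm. destruct (L0 m Hm) as [H|H].
    + right; left; apply empty_unique; auto.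
    + right; right; auto.
  - intros y s Hy IH Hs m Hm. destruct (IH m Hm) as [H|[H|H]].
    + left; apply Hs; auto.
    + left; apply Hs; auto.
    + destruct (L1 m Hm y s H Hs) as [H'|H']; auto.
Qed.

End Model.

Lemma sig_inj {A : Type} {P : A -> Prop} (a b : {x : A | P x}) : proj1_sig a = proj1_sig b -> a = b.
Proof. destruct a as [a pa], b as [b pb]; simpl; intros ->; f_equal; apply proof_irrelevance. Qed.

Section Card.
Variables (K : Type) (lt : K -> K -> Prop).
Hypothesis hreg : is_inf_regular K lt.

Lemma lt_irr i : ~ lt i i. Proof. apply hreg. Qed.
Lemma lt_trans i j k : lt i j -> lt j k -> lt i k. Proof. apply hreg. Qed.
Lemma lt_tri i j : lt i j \/ i = j \/ lt j i. Proof. apply hreg. Qed.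
Lemma lt_wf : well_founded lt. Proof. apply hreg. Qed.

Lemma K_inh : inhabited K.
Proof. destruct hreg as [_ [[f _] _]]. exact (inhabits (f 0)). Qed.

Lemma no_max i : exists j, lt i j.
Proof.
  apply NNPP; intro H.
  destruct hreg as [_ [[f Hf] Hr]].
  destruct (Hr (fun j => j = i)) as [e He].
  - intro k. exists i. split; auto. intro Hk. apply H. eauto.
  - assert (f 0 = f 1).
    { assert (e (f 0) = e (f 1)) by (apply sig_inj; destruct (e (f 0)), (e (f 1)); simpl; congruence).
      auto. }
    apply Hf in H0. discriminate.
Qed.

Lemma small_bound i (g : {j | lt j i} -> K) : exists x0, forall u, lt (g u) x0.
Proof.
  apply NNPP; intro H.
  destruct hreg as [[_ Hc] [_ Hr]].
  destruct (Hr (fun x => exists u, g u = x)) as [e He].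
  - intro k. apply NNPP; intro H'. apply H. exists k. intro u. apply NNPP; intro H2.
    apply H'. exists (g u). split; eauto.
  - apply (Hc i).
    exists (fun x => proj1_sig (constructive_indefinite_description _ (proj2_sig (e x)))).
    intros x y Hxy.
    destruct (constructive_indefinite_description _ (proj2_sig (e x))) as [ux Hx].
    destruct (constructive_indefinite_description _ (proj2_sig (e y))) as [uy Hy].
    simpl in Hxy. subst uy. apply He. apply sig_inj. congruence.
Qed.

Lemma ub2 a b : exists c, lt a c /\ lt b c.
Proof.
  destruct (lt_tri a b) as [H|[H|H]].
  - destruct (no_max b) as [c Hc]. exists c. split; eauto using lt_trans.
  - subst. destruct (no_max b) as [c Hc]. eauto.
  - destruct (no_max a) as [c Hc]. exists c. split; eauto using lt_trans.
Qed.

Lemma wf_min (P : K -> Prop) x : P x -> exists y, P y /\ forall z, lt z y -> ~ P z.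
Proof.
  intro Hx. apply NNPP; intro H.
  assert (forall y, ~ P y).
  { intro y. induction y as [y IH] using (well_founded_ind lt_wf).
    intro Py. apply H. exists y. split; auto. }
  eapply H0; eauto.
Qed.

Section Cof.
Variable i : K.

Definition Cof (d : K) := exists h : {v | lt v d} -> K,
  (forall v, lt (h v) i) /\ forall j, lt j i -> exists v, ~ lt (h v) j.

Lemma cofinality : exists (d : K) (G : {v | lt v d} -> K),
  is_cardinal {v | lt v d} (fun a b => lt (proj1_sig a) (proj1_sig b)) /\
  (forall v, lt (G v) i) /\
  (forall v v', lt (proj1_sig v) (proj1_sig v') -> lt (G v) (G v')) /\
  (forall j, lt j i -> exists v, j = G v \/ lt j (G v)).
Proof.
  assert (Ci : Cof i).
  { exists (@proj1_sig _ _). split. apply proj2_sig.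
    intros j Hj. exists (exist _ j Hj). apply lt_irr. }
  destruct (wf_min Cof i Ci) as [d [[h [Hh1 Hh2]] Hmin]].
  set (J := {v | lt v d}). set (ltJ := fun a b : J => lt (proj1_sig a) (proj1_sig b)).
  assert (wfJ : well_founded ltJ) by (exact (wf_inverse_image J K lt (@proj1_sig _ _) lt_wf)).
  assert (Hbd : forall u, lt u d -> forall g : {w | lt w u} -> K, (forall w, lt (g w) i) ->
            exists j0, lt j0 i /\ forall w, lt (g w) j0).
  { intros u Hu g Hg. apply NNPP; intro H. apply (Hmin u Hu). exists g. split; auto.
    intros j Hj. apply NNPP; intro H'. apply H. exists j. split; auto.
    intro w. apply NNPP; intro H2. apply H'. eauto. }
  set (F := fun (v : J) (rec : forall v' : J, ltJ v' v -> K) =>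
    epsilon (inhabits (h v)) (fun j => lt j i /\ ~ lt j (h v) /\
        forall v' (H : ltJ v' v), lt (rec v' H) j)).
  set (G := Fix wfJ (fun _ => K) F).
  assert (GE : forall v, G v = F v (fun v' _ => G v')).
  { intro v. unfold G. refine (Fix_eq wfJ (fun _ => K) F _ v). intros x f g Hfg.
    assert (f = g). { apply functional_extensionality_dep; intro y.
      apply functional_extensionality_dep; intro p. apply Hfg. }
    subst; reflexivity. }
  assert (Ginv : forall v, lt (G v) i /\ ~ lt (G v) (h v) /\ forall v', ltJ v' v -> lt (G v') (G v)).
  { intro v. induction v as [v IH] using (well_founded_ind wfJ).
    rewrite (GE v). unfold F.
    match goal with |- context [epsilon ?I ?P] => assert (Hex : exists j, P j) end.
    { destruct v as [v Hv].
      destruct (Hbd v Hv (fun w => G (exist _ (proj1_sig w) (lt_trans _ _ _ (proj2_sig w) Hv))))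
        as [j0 [Hj0 Hj0']].
      { intros [w Hw]. simpl. apply (IH (exist _ w _)). exact Hw. }
      destruct (lt_tri j0 (h (exist _ v Hv))) as [Hc|Hc].
      - exists (h (exist _ v Hv)). split; [apply Hh1|]. split; [apply lt_irr|].
        intros v' Hv'. eapply lt_trans; [|exact Hc].
        specialize (Hj0' (exist _ (proj1_sig v') Hv')). simpl in Hj0'.
        replace v' with (exist (fun x => lt x d) (proj1_sig v') (lt_trans _ _ _ Hv' Hv)); auto.
        apply sig_inj; reflexivity.
      - exists j0. split; auto. split.
        + intro Hc'. destruct Hc as [->|Hc]; [eapply lt_irr; eauto|]. eapply lt_irr, lt_trans; eauto.
        + intros v' Hv'. specialize (Hj0' (exist _ (proj1_sig v') Hv')). simpl in Hj0'.
          replace v' with (exist (fun x => lt x d) (proj1_sig v') (lt_trans _ _ _ Hv' Hv)); auto.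
          apply sig_inj; reflexivity. }
    pose proof (epsilon_spec (inhabits (h v)) _ Hex) as Hs. cbv beta in Hs.
    exact Hs. }
  exists d, G. split; [|split; [|split]].
  - split.
    + split; [|split; [|split]].
      * intros a; apply lt_irr.
      * intros a b c; apply lt_trans.
      * intros a b. destruct (lt_tri (proj1_sig a) (proj1_sig b)) as [H|[H|H]]; auto.
        right; left; apply sig_inj; auto.
      * exact wfJ.
    + intros u [e He].
      set (h' := fun w : {w | lt w (proj1_sig u)} =>
        match excluded_middle_informative (exists v, proj1_sig (proj1_sig (e v)) = proj1_sig w) with
        | left H => h (proj1_sig (constructive_indefinite_description _ H))
        | right _ => h u end).
      apply (Hmin (proj1_sig u) (proj2_sig u)). exists h'. split.
      * intro w. unfold h'. destruct excluded_middle_informative; apply Hh1.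
      * intros j Hj. destruct (Hh2 j Hj) as [v Hv].
        exists (exist _ (proj1_sig (proj1_sig (e v))) (proj2_sig (e v))).
        unfold h'. destruct excluded_middle_informative as [H|H].
        -- destruct (constructive_indefinite_description _ H) as [v'' Hv'']. simpl in *.
           assert (e v'' = e v) by (apply sig_inj, sig_inj; auto).
           apply He in H0. subst; auto.
        -- exfalso; apply H. exists v; reflexivity.
  - intro v; apply Ginv.
  - intros v v' Hv. apply Ginv. exact Hv.
  - intros j Hj. destruct (Hh2 j Hj) as [v Hv]. exists v.
    destruct (Ginv v) as [_ [Hg _]].
    destruct (lt_tri j (G v)) as [H|[H|H]]; auto. exfalso.
    destruct (lt_tri (h v) (G v)) as [H'|[H'|H']].
    + apply Hv; eapply lt_trans; eauto.
    + apply Hv. rewrite H'. auto.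
    + auto.
Qed.
End Cof.
End Card.

Section Main.
Variables (M : Type) (E : M -> M -> Prop) (w : M).
Hypothesis hZ : ZFCminus M E.
Hypothesis hw : is_omega M E w.
Variables (K : Type) (lt : K -> K -> Prop).
Hypothesis hreg : is_inf_regular K lt.
Hypothesis ht : lt_t M E w K.
Variables (a b : K -> M).
Hypothesis ha : forall x, E (a x) w.
Hypothesis hb : forall y, E (b y) w.
Hypothesis hamono : forall x x', lt x x' -> E (a x) (a x').
Hypothesis hbmono : forall y y', lt y y' -> E (b y') (b y).
Hypothesis hab : forall x y, E (a x) (b y).
Hypothesis hcut : ~ exists c, E c w /\ forall x y, E (a x) c /\ E c (b y).
Variable k0 : K.

Definition nh := b k0.

Lemma nh_w : E nh w. Proof. apply hb. Qed.
Lemma in_nh v : E v nh -> E v w. Proof. apply (w_trans M E w hZ hw nh nh_w). Qed.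
Lemma trans_w n : E n w -> forall u v, E u v -> E v n -> E u n.
Proof. intros; eapply nat_trans; eauto. Qed.

Lemma seq_val s k v : is_seq M E nh s -> rel_in M E s k v -> E v nh.
Proof.
  intros [m [_ [Hp _]]] [p [Hps Hop]]. destruct (Hp p Hps) as [a' [b' [Hop' [_ Hb']]]].
  destruct (opair_inj M E hZ p k v a' b' Hop Hop') as [_ ->]; auto.
Qed.

Lemma seq_fun s k v v' : is_seq M E nh s -> rel_in M E s k v -> rel_in M E s k v' -> v = v'.
Proof.
  intros [m [_ [Hp Hf]]] Hv Hv'. destruct Hv as [p [Hps Hop]].
  destruct (Hp p Hps) as [a' [b' [Hop' [Ha' _]]]].
  destruct (opair_inj M E hZ p k v a' b' Hop Hop') as [<- _].
  destruct (Hf k Ha') as [c [_ Hc]].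
  rewrite (Hc v), (Hc v'); auto. exists p; auto.
Qed.

Lemma rel_sub s t k v : seq_le M E s t -> rel_in M E s k v -> rel_in M E t k v.
Proof. intros H [p [Hp Hop]]. exists p; split; auto. Qed.

Definition Good (i : K) (s : M) : Prop :=
  is_seq M E nh s /\
  (exists x, lt i x /\ (forall k v, rel_in M E s k v -> E k (a x)) /\
             (forall k, E k (a x) -> exists v, rel_in M E s k v)) /\
  (exists z, forall k v, rel_in M E s k v -> E (b z) v) /\
  (exists k v, rel_in M E s k v /\ (E v (b i) \/ v = b i)).


Lemma choice_fun {A B : Type} (P : A -> B -> Prop) : (forall u, exists x, P u x) -> exists g, forall u, P u (g u).
Proof. intro H. exists (fun u => proj1_sig (constructive_indefinite_description _ (H u))).
  intro u. exact (proj2_sig (constructive_indefinite_description _ (H u))). Qed.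

Lemma Hcoll : Ax_coll M E. Proof. apply hZ. Qed.

Lemma step_exists i (c : {j | lt j i} -> M) (Hc : forall u, Good (proj1_sig u) (c u))
  (Hmono : forall u u', lt (proj1_sig u) (proj1_sig u') -> seq_lt M E (c u) (c u')) :
  exists s, Good i s /\ forall u, seq_lt M E (c u) s.
Proof.
  assert (Hbound : exists t, is_seq M E nh t /\ forall u, seq_le M E (c u) t).
  { destruct (cofinality K lt hreg i) as [d [G [Hcard [HG1 [HG2 HG3]]]]].
    edestruct (ht nh nh_w (ex_intro _ (a k0) (hab k0 k0)) {v | lt v d}
       (fun p q => lt (proj1_sig p) (proj1_sig q)) Hcard) with
       (f := fun v => c (exist _ (G v) (HG1 v))) as [t [Ht1 Ht2]].
    - exists (@proj1_sig _ _). intros; apply sig_inj; auto.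
    - intros v. apply Hc.
    - intros p q Hpq. apply Hmono. simpl. apply HG2; auto.
    - exists t. split; auto. intro u. destruct (HG3 (proj1_sig u) (proj2_sig u)) as [v [Hv|Hv]].
      + replace u with (exist (fun j => lt j i) (G v) (HG1 v)) by (apply sig_inj; simpl; auto). apply Ht2.
      + intros z Hz. apply (Ht2 v). apply (proj1 (Hmono u (exist _ (G v) (HG1 v)) Hv)). auto. }
  destruct Hbound as [t [Ht Htb]].
  destruct (choice_fun (fun u x => lt (proj1_sig u) x /\ (forall k v, rel_in M E (c u) k v -> E k (a x))))
    as [gx Hgx].
  { intro u. destruct (Hc u) as [_ [[x [H1 [H2 _]]] _]]. eauto. }
  destruct (choice_fun (fun u z => forall k v, rel_in M E (c u) k v -> E (b z) v)) as [gz Hgz].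
  { intro u. destruct (Hc u) as [_ [_ [H _]]]. exact H. }
  destruct (small_bound K lt hreg i gx) as [x0 Hx0].
  destruct (small_bound K lt hreg i gz) as [y0 Hy0].
  assert (Hdom : forall u k v, rel_in M E (c u) k v -> E k (a x0)).
  { intros u k v H. apply (trans_w (a x0) (ha x0) k (a (gx u))); [apply (Hgx u) with v; auto|].
    apply hamono; auto. }
  assert (Hval : forall u k v, rel_in M E (c u) k v -> E (b y0) v).
  { intros u k v H. assert (Hv : E v w).
    { apply in_nh. eapply seq_val; [apply (Hc u)|eauto]. }
    apply (trans_w v Hv (b y0) (b (gz u))); [apply hbmono; auto|]. eapply Hgz; eauto. }
  destruct (ub2 K lt hreg x0 i) as [x1 [Hx01 Hix1]].
  destruct (ub2 K lt hreg y0 i) as [c1 [Hy0c1 Hic1]].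
  destruct (ub2 K lt hreg c1 k0) as [y1 [Hc1y1 Hk0y1]].
  assert (Hy01 : lt y0 y1) by (eapply lt_trans; eauto).
  assert (Hiy1 : lt i y1) by (eapply lt_trans; eauto).
  destruct (no_max K lt hreg y1) as [y2 Hy12].
  destruct (Hcoll (f_opair 0 1 2) (scons (b y1) (fun _ => w)) (a x1)) as [B HB].
  { intros k _. destruct (opair_exists M E hZ k (b y1)) as [p Hp]. exists p.
    apply (sat_opair M E (scons p (scons k (scons (b y1) (fun _ => w)))) 0 1 2). exact Hp. }
  assert (HB' : forall k, E k (a x1) -> exists p, E p B /\ is_opair M E p k (b y1)).
  { intros k Hk. destruct (HB k Hk) as [p [Hp1 Hp2]]. exists p. split; [exact Hp1|].
    apply (sat_opair M E (scons p (scons k (scons (b y1) (fun _ => w)))) 0 1 2). exact Hp2. }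
  destruct (union2 M E hZ t B) as [U HU].
  set (D := fun k => E k (a x0) /\ exists v, rel_in M E t k v /\ E (b y0) v).
  destruct (sep' M E hZ (fun p => (E p t /\ exists k v, is_opair M E p k v /\ E k (a x0) /\ E (b y0) v) \/
      (exists k, is_opair M E p k (b y1) /\ E k (a x1) /\ ~ D k))
    (fOr (fAnd (fIn 0 1) (fEx (fEx (fAnd (f_opair 2 1 0) (fAnd (fIn 1 4) (fIn 5 0))))))
         (fEx (fAnd (f_opair 1 0 5) (fAnd (fIn 0 6) (fNeg (fAnd (fIn 0 3) (fEx (fAnd (f_rel 3 1 0) (fIn 5 0)))))))))
    (scons t (scons (a x0) (scons (b y0) (scons (b y1) (scons (a x1) (fun _ => w))))))) with (a := U)
    as [s Hs].
  { intro p. cbn [sat]. setoid_rewrite sat_opair. setoid_rewrite sat_rel. cbn [scons]. unfold D. tauto. }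
  assert (Hax01 : forall k, E k (a x0) -> E k (a x1)).
  { intros k Hk. apply (trans_w (a x1) (ha x1) k (a x0)); auto. }
  assert (Hfw : forall k v, rel_in M E s k v ->
     (rel_in M E t k v /\ E k (a x0) /\ E (b y0) v) \/ (v = b y1 /\ E k (a x1) /\ ~ D k)).
  { intros k v [p [Hp Hop]]. apply Hs in Hp. destruct Hp as [_ [[Hpt [k' [v' [Hop' [H1 H2]]]]]|[k' [Hop' [H1 H2]]]]].
    - destruct (opair_inj M E hZ p k v k' v' Hop Hop') as [-> ->]. left. split; auto. exists p; auto.
    - destruct (opair_inj M E hZ p k v k' (b y1) Hop Hop') as [-> ->]. right. auto. }
  assert (Hbw1 : forall k v, rel_in M E t k v -> E k (a x0) -> E (b y0) v -> rel_in M E s k v).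
  { intros k v [p [Hp Hop]] H1 H2. exists p. split; auto. apply Hs. split; [apply HU; auto|].
    left. split; auto. exists k, v. auto. }
  assert (Hbw2 : forall k, E k (a x1) -> ~ D k -> rel_in M E s k (b y1)).
  { intros k H1 H2. destruct (HB' k H1) as [p [Hp Hop]]. exists p. split; auto.
    apply Hs. split; [apply HU; auto|]. right. exists k. auto. }
  assert (Hex : forall k, E k (a x1) -> exists v, rel_in M E s k v).
  { intros k Hk. destruct (classic (D k)) as [HD|HD].
    - destruct HD as [H1 [v [H2 H3]]]. exists v. auto.
    - exists (b y1). auto. }
  assert (Huniq : forall k v v', rel_in M E s k v -> rel_in M E s k v' -> v = v').
  { intros k v v' Hv Hv'. apply Hfw in Hv. apply Hfw in Hv'.
    destruct Hv as [[A1 [A2 A3]]|[A1 [A2 A3]]]; destruct Hv' as [[B1 [B2 B3]]|[B1 [B2 B3]]].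
    - eapply seq_fun; eauto.
    - exfalso. apply B3. split; eauto.
    - exfalso. apply A3. split; eauto.
    - congruence. }
  assert (Hnot : ~ D (a x0)).
  { intros [H _]. eapply no_self; eauto. }
  assert (Hw0 : rel_in M E s (a x0) (b y1)) by (apply Hbw2; auto).
  exists s. split.
  - split; [|split; [|split]].
    + exists (a x1). split; [apply hab|]. split.
      * intros p Hp. assert (Hp' := Hp). apply Hs in Hp'.
        destruct Hp' as [_ [[Hpt [k [v [Hop [H1 H2]]]]]|[k [Hop [H1 H2]]]]].
        -- exists k, v. split; [exact Hop|]. split; [apply Hax01; exact H1|].
           eapply seq_val; [exact Ht|]. exists p; split; [exact Hpt|exact Hop].
        -- exists k, (b y1). split; auto. split; auto. apply hbmono; auto.
      * intros k Hk. destruct (Hex k Hk) as [v Hv]. exists v. split; auto.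
        intros v' Hv'. eapply Huniq; eauto.
    + exists x1. split; auto. split; auto.
      intros k v Hv. apply Hfw in Hv. destruct Hv as [[_ [H _]]|[_ [H _]]]; auto.
    + exists y2. intros k v Hv. apply Hfw in Hv. destruct Hv as [[A1 [A2 A3]]|[A1 [A2 A3]]].
      * assert (Hv : E v w) by (apply in_nh; eapply seq_val; eauto).
        apply (trans_w v Hv (b y2) (b y0)); auto. apply hbmono. eapply lt_trans; eauto.
      * subst v. apply hbmono; auto.
    + exists (a x0), (b y1). split; [exact Hw0|]. left. apply hbmono; auto.
  - intro u. split.
    + intros p Hp. assert (Hpt : E p t) by (apply (Htb u); exact Hp).
      apply Hs. split; [apply HU; auto|]. left. split; auto.
      destruct (Hc u) as [[m [_ [Hm _]]] _]. destruct (Hm p Hp) as [k [v [Hop _]]].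
      exists k, v. split; auto. assert (Hr : rel_in M E (c u) k v) by (exists p; auto).
      split; [eapply Hdom|eapply Hval]; eauto.
    + intro Heq. rewrite <- Heq in Hw0. apply Hdom in Hw0. eapply no_self; eauto.
Qed.


Lemma chain_exists : exists f : K -> M, forall i, Good i (f i) /\ forall j, lt j i -> seq_lt M E (f j) (f i).
Proof.
  set (F := fun (i : K) (rec : forall j, lt j i -> M) =>
    epsilon (inhabits w) (fun s => Good i s /\ forall j (H : lt j i), seq_lt M E (rec j H) s)).
  set (f := Fix (lt_wf K lt hreg) (fun _ => M) F).
  assert (FE : forall i, f i = F i (fun j _ => f j)).
  { intro i. unfold f. refine (Fix_eq (lt_wf K lt hreg) (fun _ => M) F _ i). intros x g1 g2 Hg.
    assert (g1 = g2). { apply functional_extensionality_dep; intro y.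
      apply functional_extensionality_dep; intro p. apply Hg. }
    subst; reflexivity. }
  exists f. intro i. induction i as [i IH] using (well_founded_ind (lt_wf K lt hreg)).
  rewrite (FE i). unfold F.
  match goal with |- context [epsilon ?I ?P] => assert (Hex : exists s, P s) end.
  { destruct (step_exists i (fun u => f (proj1_sig u))) as [s [Hs1 Hs2]].
    - intros [u Hu]. apply IH; auto.
    - intros [u Hu] [u' Hu'] H. simpl in *. apply IH; auto.
    - exists s. split; auto. intros j H. apply (Hs2 (exist _ j H)). }
  pose proof (epsilon_spec (inhabits w) _ Hex) as Hs. cbv beta in Hs.
  exact Hs.
Qed.

Lemma final_contra : False.
Proof.
  destruct chain_exists as [f Hf].
  edestruct (ht nh nh_w (ex_intro _ (a k0) (hab k0 k0)) K lt (proj1 hreg)) with (f := f) as [T [HT HTb]].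
  - exists (fun x => x). auto.
  - intro j. apply Hf.
  - intros i j H. apply Hf; auto.
  - assert (R1 : forall x, (forall j v, rel_in M E T j v -> (E j (a x) \/ j = a x) -> E (a x) v)).
    { intros x j v Hjv Hj. destruct (Hf x) as [[Hseq [[x' [Hxx' [Hd1 Hd2]]] [[z Hz] _]]] _].
      assert (Hj' : E j (a x')).
      { destruct Hj as [Hj| ->]; [|apply hamono; auto].
        apply (trans_w (a x') (ha x') j (a x)); auto. }
      destruct (Hd2 j Hj') as [v' Hv'].
      assert (v = v') by (eapply seq_fun; [exact HT|exact Hjv|eapply rel_sub; [apply HTb|exact Hv']]).
      subst v'. assert (Hvw : E v w) by (apply in_nh; eapply seq_val; eauto).
      apply (trans_w v Hvw (a x) (b z)); [apply hab|eapply Hz; eauto]. }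
    assert (R2 : forall y, exists k v, rel_in M E T k v /\ E k (b y) /\ (E v (b y) \/ v = b y)).
    { intros y. destruct (Hf y) as [[Hseq [[x' [Hxx' [Hd1 Hd2]]] [_ [k [v [Hkv Hv]]]]]] _].
      exists k, v. split; [eapply rel_sub; [apply HTb|exact Hkv]|]. split; auto.
      apply (trans_w (b y) (hb y) k (a x')); eauto. }
    set (Sp := fun k => forall j v, rel_in M E T j v -> (E j k \/ j = k) -> E k v).
    assert (HbS : forall y, ~ Sp (b y)).
    { intros y HS. destruct (R2 y) as [k [v [H1 [H2 H3]]]].
      specialize (HS k v H1 (or_introl H2)).
      destruct H3 as [H3| ->]; [|exact (no_self M E hZ _ HS)].
      apply (no_self M E hZ (b y)). apply (trans_w (b y) (hb y) (b y) v); eauto. }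
    destruct (sep' M E hZ (fun k => ~ Sp k)
      (fNeg (fAll (fAll (fImp (f_rel 3 1 0) (fImp (fOr (fIn 1 2) (fEq 1 2)) (fIn 2 0))))))
      (scons T (fun _ => w))) with (a := nh) as [D HD].
    { intro k. cbn [sat]. setoid_rewrite sat_rel. cbn [scons]. unfold Sp. tauto. }
    destruct (no_max K lt hreg k0) as [y1 Hy1].
    destruct (proj1 (proj2 hZ) D) as [c [Hc Hcmin]].
    { exists (b y1). apply HD. split; [apply hbmono; auto|apply HbS]. }
    apply HD in Hc. destruct Hc as [Hcn HcS].
    assert (Hcw : E c w) by (apply in_nh; auto).
    assert (Hnb : forall y, ~ E (b y) c).
    { intros y H. apply Hcmin. exists (b y). split; auto. apply HD. split.
      - apply (trans_w nh nh_w (b y) c); auto.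
      - apply HbS. }
    apply hcut. exists c. split; auto. intros x y. split.
    + destruct (tri M E w hZ hw c Hcw (a x) (ha x)) as [H|[H|H]]; auto.
      * exfalso. apply HcS. subst c. intros j v Hjv Hj. apply (R1 x j v Hjv Hj).
      * exfalso. apply HcS. intros j v Hjv Hj.
        assert (Hj' : E j (a x)) by (destruct Hj as [Hj| ->]; auto; apply (trans_w (a x) (ha x) j c); auto).
        assert (Hvw : E v w) by (apply in_nh; eapply seq_val; eauto).
        apply (trans_w v Hvw c (a x)); auto. apply (R1 x j v Hjv (or_introl Hj')).
    + destruct (tri M E w hZ hw (b y) (hb y) c Hcw) as [H|[H|H]]; auto.
      * exfalso. destruct (no_max K lt hreg y) as [y' Hy']. apply (Hnb y').
        rewrite H. apply hbmono; auto.
      * exfalso. eapply Hnb; eauto.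
Qed.

End Main.

Theorem mainTheorem6
  (M : Type) (E : M -> M -> Prop) (w : M)
  (hZ : ZFCminus M E) (hw : is_omega M E w) (hns : omega_nonstandard M E w)
  (K : Type) (ltK : K -> K -> Prop) (hK : is_cardinal K ltK)
  (hp : is_p M E w K) (ht : lt_t M E w K) :
  ~ in_C M E w K ltK K ltK.
Proof.
  intros [hreg [_ [a [b [ha [hb [hamono [hbmono [hab hcut]]]]]]]]].
  destruct (K_inh K ltK hreg) as [k0].
  exact (final_contra M E w hZ hw K ltK hreg ht a b ha hb hamono hbmono hab hcut k0).
Qed.
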